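(* Let $l$ be a prime, $n\ge 2$, and $\mathcal{G}_n=\langle\alpha_1,\dots,\alpha_n\rangle\le S_{l^n}$ with $\alpha_r$ the product of the $l$-cycles $(j,\ j+l^{r-1},\dots,\ j+(l-1)l^{r-1})$, $j=1,\dots,l^{r-1}$. Let $\beta_i=((i-1)l+1,\ (i-1)l+2,\dots,\ il)$ for $1\le i\le l^{n-1}$. Then every $l$-cycle in $\mathcal{G}_n$ is of the form $\beta_i^j$ for some $i$ and $j$, and the conjugacy class of $\alpha_1=\beta_1$ in $\mathcal{G}_n$ is exactly $\{\beta_1,\dots,\beta_{l^{n-1}}\}$; in particular it has $l^{n-1}$ elements. *)

(* Defs.v *)
From HB Require Import structures.
From mathcomp Require Import all_boot all_order all_fingroup.
Set Implicit Arguments. Unset Strict Implicit. Unset Printing Implicit Defensive.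

(* Points {1,...,N} of the paper are represented 0-indexed by 'I_N
   (paper point p  <->  ordinal p-1).  A point x is written in base l;
   [digit_incr l q x] (q = l^k) increments the base-l digit of x at
   position k modulo l, leaving all other digits unchanged. *)
Definition digit_incr (l q x : nat) : nat :=
  (x %/ (q * l)) * (q * l) + ((x %/ q %% l).+1 %% l) * q + x %% q.
Definition digit_decr (l q x : nat) : nat :=
  (x %/ (q * l)) * (q * l) + ((x %/ q %% l + l.-1) %% l) * q + x %% q.

(* [block_rot l q m N]: on the block {m*q*l, ..., (m+1)*q*l - 1} (provided
   it lies inside [0,N)) increment the digit at position q; identity
   elsewhere.  This is a product of q disjoint l-cycles
   (j, j+q, ..., j+(l-1)q), j = m*q*l, ..., m*q*l + q - 1. *)
Definition blk_ok (l q m N x : nat) : bool :=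
  [&& 0 < q, 0 < l, x %/ (q * l) == m & m.+1 * (q * l) <= N].
Definition block_rot (l q m N x : nat) : nat :=
  if blk_ok l q m N x then digit_incr l q x else x.
Definition block_rot_inv (l q m N x : nat) : nat :=
  if blk_ok l q m N x then digit_decr l q x else x.

Lemma decomp_digits (l q A e c : nat) : 0 < q -> 0 < l -> c < q -> e < l ->
  let y := A * (q * l) + e * q + c in
  [/\ y %/ (q * l) = A, y %/ q %% l = e & y %% q = c].
Proof.
move=> q0 l0 cq el y.
have ql0 : 0 < q * l by rewrite muln_gt0 q0.
have Hy : y = (A * l + e) * q + c by rewrite /y mulnDl -mulnA [l * q]mulnC.
have Hdq : y %/ q = A * l + e by rewrite Hy divnMDl // divn_small // addn0.
split.
- rewrite /y -addnA divnMDl // divn_small ?addn0 //.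
  apply: (@leq_trans (e.+1 * q)); first by rewrite mulSnr ltn_add2l.
  by rewrite mulnC leq_mul2l el orbT.
- by rewrite Hdq modnMDl modn_small.
- by rewrite Hy modnMDl modn_small.
Qed.

Lemma digit_eq (l q x : nat) :
  x = (x %/ (q * l)) * (q * l) + (x %/ q %% l) * q + x %% q.
Proof.
rewrite divnMA [q * l]mulnC mulnA -mulnDl -divn_eq; exact: divn_eq.
Qed.

Lemma digit_incr_blk l q x : 0 < q -> 0 < l ->
  digit_incr l q x %/ (q * l) = x %/ (q * l).
Proof.
move=> q0 l0; have [-> _ _] := decomp_digits (x %/ (q * l)) q0 l0
  (ltn_pmod x q0) (ltn_pmod (x %/ q %% l).+1 l0); done.
Qed.

Lemma digit_decr_blk l q x : 0 < q -> 0 < l ->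
  digit_decr l q x %/ (q * l) = x %/ (q * l).
Proof.
move=> q0 l0; have [-> _ _] := decomp_digits (x %/ (q * l)) q0 l0
  (ltn_pmod x q0) (ltn_pmod (x %/ q %% l + l.-1) l0); done.
Qed.

Lemma digit_incrK l q x : 0 < q -> 0 < l ->
  digit_decr l q (digit_incr l q x) = x.
Proof.
move=> q0 l0.
have [H1 H2 H3] := decomp_digits (x %/ (q * l)) q0 l0
  (ltn_pmod x q0) (ltn_pmod (x %/ q %% l).+1 l0).
rewrite /digit_decr H1 H2 H3 modnDml addSnnS prednK // modnDr modn_mod.
by rewrite -digit_eq.
Qed.

Lemma block_rotK l q m N : cancel (block_rot l q m N) (block_rot_inv l q m N).
Proof.
move=> x; rewrite /block_rot /block_rot_inv.
case Hx: (blk_ok l q m N x); last by rewrite Hx.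
move: (Hx) => /and4P [q0 l0 /eqP xm mN].
by rewrite /blk_ok q0 l0 digit_incr_blk // xm eqxx mN /= digit_incrK.
Qed.

Lemma block_rot_lt l q m N x : x < N -> block_rot l q m N x < N.
Proof.
rewrite /block_rot; case Hx: (blk_ok l q m N x) => // xN.
move: Hx => /and4P [q0 l0 /eqP xm mN].
apply: leq_trans mN.
have ql0 : 0 < q * l by rewrite muln_gt0 q0.
by rewrite -xm -(digit_incr_blk x q0 l0) ltn_ceil.
Qed.

Definition block_rot_ord (l q m N : nat) (x : 'I_N) : 'I_N :=
  Ordinal (block_rot_lt l q m (ltn_ord x)).

Lemma block_rot_ord_inj l q m N : injective (@block_rot_ord l q m N).
Proof.
move=> x y /(congr1 val) /= /(can_inj (@block_rotK l q m N)) H.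
exact: val_inj.
Qed.

Definition block_perm (l q m N : nat) : {perm 'I_N} :=
  perm (@block_rot_ord_inj l q m N).

(* alpha_r (1 <= r <= n): product of the l-cycles
   (j, j + l^(r-1), ..., j + (l-1) l^(r-1)), j = 1..l^(r-1)   (paper indexing),
   i.e. increment digit r-1 on the block {1, ..., l^r}. *)
Definition alpha (l n r : nat) : {perm 'I_(l ^ n)} :=
  block_perm l (l ^ r.-1) 0 (l ^ n).

(* beta_i (1 <= i <= l^(n-1)): the l-cycle ((i-1)l+1, (i-1)l+2, ..., il). *)
Definition beta (l n i : nat) : {perm 'I_(l ^ n)} :=
  block_perm l 1 i.-1 (l ^ n).

Definition Gn (l n : nat) : {set {perm 'I_(l ^ n)}} :=
  <<[set alpha l n (val r).+1 | r : 'I_n]>>%g.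

Definition is_kcycle (T : finType) (k : nat) (s : {perm T}) : Prop :=
  exists x : T, #|porbit s x| = k /\ forall y, y \notin porbit s x -> s y = y.

(* Main.v *)
Require Import Defs.
From HB Require Import structures.
From mathcomp Require Import all_boot all_order all_fingroup.
Set Implicit Arguments. Unset Strict Implicit. Unset Printing Implicit Defensive.

Definition rotk (l k x : nat) := x %/ l * l + (x %% l + k) %% l.

Lemma rotk_div l k x : 0 < l -> rotk l k x %/ l = x %/ l.
Proof. move=> l0; rewrite /rotk divnMDl // (divn_small (ltn_pmod _ l0)) addn0 //. Qed.

Lemma rotk_mod l k x : 0 < l -> rotk l k x %% l = (x %% l + k) %% l.
Proof. by move=> l0; rewrite /rotk modnMDl modn_mod. Qed.

Lemma rotk0 l x : rotk l 0 x = x.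
Proof. by rewrite /rotk addn0 modn_mod -divn_eq. Qed.

Lemma rotk_add l a b x : 0 < l -> rotk l a (rotk l b x) = rotk l (b + a) x.
Proof.
move=> l0; rewrite {1}/rotk rotk_div // rotk_mod // modnDml /rotk addnA //.
Qed.

Lemma blk_le x l N : 0 < l -> l %| N -> x < N -> (x %/ l).+1 * l <= N.
Proof.
move=> l0 dN xN; rewrite -[X in _ <= X](divnK dN) leq_mul2r; apply/orP; right.
by rewrite ltn_divLR // divnK.
Qed.

Lemma rotk_lt l k x N : 0 < l -> l %| N -> x < N -> rotk l k x < N.
Proof.
move=> l0 dN xN; apply: leq_trans (blk_le l0 dN xN).
by rewrite mulSn addnC /rotk ltn_add2l ltn_pmod.
Qed.

Lemma rotk_inj l k a b : 0 < l -> rotk l k a = rotk l k b -> a = b.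
Proof.
move=> l0 H.
have H1 : a %/ l = b %/ l by rewrite -(rotk_div k a l0) H rotk_div.
have H2 : (a %% l + k == b %% l + k %[mod l]) by rewrite -!rotk_mod // H.
rewrite eqn_modDr !modn_mod in H2.
by rewrite (divn_eq a l) (divn_eq b l) H1 (eqP H2).
Qed.

Lemma rotk_rep l x y : 0 < l -> y %/ l = x %/ l ->
  y = rotk l ((y %% l + (l - x %% l)) %% l) x.
Proof.
move=> l0 H; rewrite /rotk modnDmr addnCA subnKC; last exact: ltnW (ltn_pmod _ l0).
by rewrite modnDr modn_mod -H -divn_eq.
Qed.

Lemma rotk_addl l k Y c : 0 < l -> l %| Y -> rotk l k (Y + c) = Y + rotk l k c.
Proof.
move=> l0 dY; rewrite /rotk divnDl // mulnDl divnK // -addnA; congr (_ + _).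
by rewrite -(modnDml Y c) (eqP dY) add0n.
Qed.

Lemma digit1 l y : digit_incr l 1 y = rotk l 1 y.
Proof. by rewrite /digit_incr /rotk !mul1n divn1 muln1 modn1 addn0 addn1. Qed.

Lemma rotk_digits l q x : 0 < l -> 0 < q -> l %| q ->
  let A := x %/ (q * l) in let e := x %/ q %% l in let c := x %% q in
  rotk l 1 x = A * (q * l) + e * q + rotk l 1 c /\ rotk l 1 c < q.
Proof.
move=> l0 q0 dq A e c.
have Hc : rotk l 1 c < q by apply: rotk_lt => //; rewrite ltn_pmod.
split => //.
rewrite {1}(digit_eq l q x) -/A -/e -/c rotk_addl //.
by rewrite dvdn_add // dvdn_mull // ?dvdn_mull // dvdn_mulr.
Qed.

Lemma alpha_comm_nat l q N x : 0 < l -> l %| N -> (q = 1 \/ (0 < q /\ l %| q)) ->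
  block_rot l q 0 N (rotk l 1 x) = rotk l 1 (block_rot l q 0 N x).
Proof.
move=> l0 dN [->|[q0 dq]].
  rewrite /block_rot /blk_ok !mul1n rotk_div //.
  by case: ifP => // _; rewrite !digit1.
have [Hr Hc] := rotk_digits x l0 q0 dq.
have He : x %/ q %% l < l by rewrite ltn_pmod.
have [D1 D2 D3] := decomp_digits (x %/ (q * l)) q0 l0 Hc He.
rewrite /block_rot /blk_ok Hr D1.
case: ifP => // _.
rewrite /digit_incr D1 D2 D3.
have Hm : (x %/ q %% l).+1 %% l < l by rewrite ltn_pmod.
rewrite rotk_addl //.
by rewrite dvdn_add // dvdn_mull // ?dvdn_mull // dvdn_mulr.
Qed.

Lemma mul_lt a l n : 0 < l -> 0 < n -> a < l ^ (n - 1) -> a * l < l ^ n.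
Proof. by move=> l0 n0 H; rewrite -(prednK n0) expnSr ltn_pmul2r // -subn1. Qed.

Section S.
Variables l n : nat.
Hypothesis hl : 1 < l.
Hypothesis hn : 0 < n.
Local Notation N := (l ^ n).
Let l0 : 0 < l. Proof. exact: ltnW. Qed.
Let dN : l %| N. Proof. by rewrite dvdn_exp. Qed.

Lemma rotO_lt k (x : 'I_N) : rotk l k x < N.
Proof. exact: rotk_lt. Qed.
Definition rotO k (x : 'I_N) : 'I_N := Ordinal (rotO_lt k x).
Lemma rotO_inj k : injective (rotO k).
Proof. move=> a b /(congr1 val) /= /rotk_inj H; apply: val_inj; exact: H. Qed.
Definition Rp := perm (@rotO_inj 1).

Lemma alpha_val r (x : 'I_N) : val (alpha l n r x) = block_rot l (l ^ r.-1) 0 N x.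
Proof. by rewrite /alpha /block_perm permE. Qed.

Lemma beta_val i (x : 'I_N) :
  val (beta l n i.+1 x) = if x %/ l == i then rotk l 1 x else x.
Proof.
rewrite /beta /block_perm permE /= /block_rot /blk_ok !mul1n l0 /=.
case: eqP => // Hx; rewrite ?digit1 -Hx blk_le //; exact: ltn_ord.
Qed.

Lemma alpha_comm r (x : 'I_N) : r < n ->
  alpha l n r.+1 (rotO 1 x) = rotO 1 (alpha l n r.+1 x).
Proof.
move=> rn; apply: val_inj; rewrite /= !alpha_val /=.
apply: alpha_comm_nat => //; case: r rn => [|r] rn; [left | right] => //.
by rewrite expn_gt0 l0 dvdn_exp.
Qed.

Lemma Gn_sub : Gn l n \subset 'C[Rp]%g.
Proof.
rewrite /Gn gen_subG; apply/subsetP => g /imsetP [r _ ->].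
apply/cent1P; apply/permP => x; rewrite !permM.
rewrite /Rp !(@permE _ (rotO 1)) alpha_comm //; exact: ltn_ord.
Qed.

Lemma rotO_S k (x : 'I_N) : rotO 1 (rotO k x) = rotO k.+1 x.
Proof. by apply: val_inj; rewrite /= rotk_add // addn1. Qed.

Lemma rotO_0 (x : 'I_N) : rotO 0 x = x.
Proof. by apply: val_inj; rewrite /= rotk0. Qed.

Lemma rotO_add a b (x : 'I_N) : rotO a (rotO b x) = rotO (b + a) x.
Proof. by apply: val_inj; rewrite /= rotk_add. Qed.

Lemma commR g : g \in Gn l n -> forall k x, g (rotO k x) = rotO k (g x).
Proof.
move=> /(subsetP Gn_sub) /cent1P /permP H k x.
have H1 y : g (rotO 1 y) = rotO 1 (g y).
  by have := H y; rewrite !permM permE => ->; rewrite permE.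
elim: k => [|k IH]; first by rewrite !rotO_0.
by rewrite -[in LHS]rotO_S -[in RHS]rotO_S H1 IH.
Qed.


Lemma betaX_val i c (y : 'I_N) :
  val ((beta l n i.+1 ^+ c)%g y) = if y %/ l == i then rotk l c y else y.
Proof.
elim: c => [|c IH]; first by rewrite expg0 perm1 rotk0; case: ifP.
rewrite expgSr permM beta_val IH.
have [Hy|Hy] := eqVneq (y %/ l) i; last by rewrite (negbTE Hy).
by rewrite rotk_div // Hy eqxx rotk_add // addn1.
Qed.

Lemma rotO_val k (x : 'I_N) : val (rotO k x) = rotk l k x.
Proof. by []. Qed.

Lemma kcycle_beta s : s \in Gn l n -> is_kcycle l s ->
  exists i j : nat, (1 <= i <= l ^ (n - 1)) /\ s = (beta l n i ^+ j)%g.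
Proof.
move=> sG [x [cS fixS]].
have Hs := commR sG.
have sx : s x != x.
  apply/eqP => sxx.
  have : porbit s x \subset [set x].
    apply/subsetP => y /porbitP [i ->]; rewrite in_set1.
    elim: i => [|i IH]; first by rewrite expg0 perm1.
    by rewrite expgSr permM (eqP IH) sxx.
  by move/subset_leq_card; rewrite cards1 cS leqNgt hl.
have movedS y : s y != y -> y \in porbit s x.
  by move=> H; apply/negPn/negP => /fixS E; rewrite E eqxx in H.
pose I := [set rotO (val k) x | k : 'I_l].
have cI : #|I| = l.
  rewrite card_imset ?card_ord // => k1 k2 H.
  have E : (x %% l + k1 == x %% l + k2 %[mod l]).
    by rewrite -!rotk_mod // -!rotO_val H.
  rewrite eqn_modDl !modn_small // in E; exact: val_inj (eqP E).
have IS : I \subset porbit s x.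
  apply/subsetP => y /imsetP [k _ ->]; apply: movedS; rewrite Hs.
  by apply/eqP => /rotO_inj E; rewrite E eqxx in sx.
have IeS : I = porbit s x by apply/eqP; rewrite eqEcard IS cI cS leqnn.
have fixo (y : 'I_N) : y %/ l != x %/ l -> s y = y.
  move=> H; apply/eqP; apply/negPn/negP => /movedS.
  rewrite -IeS => /imsetP [k _ Hy].
  by rewrite Hy rotO_val rotk_div // eqxx in H.
have sxI : s x \in I.
  rewrite IeS; apply: movedS; apply/eqP => E; move/perm_inj: E => E.
  by rewrite E eqxx in sx.
case/imsetP: sxI => c _ Hc.
have xlt : x %/ l < l ^ (n - 1).
  by rewrite ltn_divLR // -expnSr subn1 prednK.
exists (x %/ l).+1, c; split; first by rewrite ltn0Sn.
apply/permP => y; apply: val_inj; rewrite betaX_val.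
case: eqP => Hy; last by rewrite fixo //; apply/eqP.
have Ey : y = rotO ((y %% l + (l - x %% l)) %% l) x.
  by apply: val_inj; rewrite rotO_val -rotk_rep.
by rewrite Ey Hs Hc rotO_add addnC -rotO_add.
Qed.


Lemma beta_ord i (x : 'I_N) :
  beta l n i.+1 x = if x %/ l == i then rotO 1 x else x.
Proof. by apply: val_inj; rewrite beta_val; case: ifP. Qed.

Lemma blockG g a b : g \in Gn l n ->
  ((g a : nat) %/ l == (g b : nat) %/ l) = ((a : nat) %/ l == (b : nat) %/ l).
Proof.
move=> gG; have Hs := commR gG.
apply/idP/idP => /eqP H.
  have Eb : g b = rotO ((g b %% l + (l - g a %% l)) %% l) (g a).
    by apply: val_inj; rewrite rotO_val -rotk_rep.
  rewrite -Hs in Eb; move/perm_inj: Eb => ->.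
  by rewrite rotO_val rotk_div.
have Eb : b = rotO ((b %% l + (l - a %% l)) %% l) a.
  by apply: val_inj; rewrite rotO_val -rotk_rep.
by rewrite Eb Hs rotO_val rotk_div.
Qed.

Lemma conj_alpha g (y : 'I_N) : g \in Gn l n -> (y : nat) %/ l = 0 ->
  (alpha l n 1 ^ g)%g = beta l n ((g y : nat) %/ l).+1.
Proof.
move=> gG y0; have Hs := commR gG.
apply/permP => z; rewrite conjgE !permM.
rewrite -{2}(permKV g z); move: (g^-1%g z) => w.
have -> : alpha l n 1 = beta l n 0.+1 by [].
rewrite !beta_ord blockG // y0.
by case: ifP => // _; rewrite Hs.
Qed.

Lemma alpha_in r : r < n -> alpha l n r.+1 \in Gn l n.
Proof. by move=> rn; rewrite /Gn mem_gen //; apply/imsetP; exists (Ordinal rn). Qed.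

Lemma alphaX_val r d (y : 'I_N) : r < n -> d < l -> (y : nat) < l ^ r ->
  val ((alpha l n r.+1 ^+ d)%g y) = d * l ^ r + y.
Proof.
move=> rn; elim: d => [|d IH] dl yr; first by rewrite expg0 perm1.
rewrite expgSr permM alpha_val IH ?(ltnW dl) //=.
have q0 : 0 < l ^ r by rewrite expn_gt0 l0.
have := decomp_digits 0 q0 l0 yr (ltnW dl); rewrite mul0n add0n => -[D1 D2 D3].
rewrite /block_rot /blk_ok q0 l0 D1 eqxx mul1n -expnSr leq_exp2l // rn /=.
by rewrite /digit_incr D1 D2 D3 mul0n add0n modn_small.
Qed.

Lemma N_gt0 : 0 < N. Proof. by rewrite expn_gt0 l0. Qed.
Definition p0 : 'I_N := Ordinal N_gt0.

Lemma reach k : k <= n -> forall x, x < l ^ k ->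
  exists2 g, g \in Gn l n & val (g p0) = x.
Proof.
elim: k => [|k IH] kn x.
  rewrite expn0 ltnS leqn0 => /eqP ->; exists 1%g; first exact: group1.
  by rewrite perm1.
move=> xk.
have q0 : 0 < l ^ k by rewrite expn_gt0 l0.
have [g gG Hg] := IH (ltnW kn) (x %% l ^ k) (ltn_pmod _ q0).
exists (g * alpha l n k.+1 ^+ (x %/ l ^ k))%g.
  by rewrite groupM // groupX // alpha_in.
rewrite permM alphaX_val // ?Hg ?ltn_pmod // -?divn_eq //.
by rewrite ltn_divLR // -expnS.
Qed.

Lemma beta_inj : injective (fun i : 'I_(l ^ (n - 1)) => beta l n (val i).+1).
Proof.
move=> i j /= H; apply: val_inj; apply/eqP; apply/negPn/negP => ij.
have il : (i : nat) * l < N.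
  exact: mul_lt (ltn_ord i).
have := congr1 (fun p : {perm 'I_N} => val (p (Ordinal il))) H; rewrite /= !beta_val mulnK //.
rewrite eqxx (negbTE ij) /rotk mulnK // modnMl add0n modn_small //.
by move/eqP; rewrite /= -[X in _ == X](addn0 (i * l)) eqn_add2l.
Qed.

End S.

Theorem main_aux (l n : nat) (hl : prime l) (hn : 2 <= n) :
  (forall s : {perm 'I_(l ^ n)}, s \in Gn l n -> is_kcycle l s ->
     exists i j : nat, (1 <= i <= l ^ (n - 1)) /\ s = (beta l n i ^+ j)%g)
  /\ (alpha l n 1 ^: Gn l n)%g = [set beta l n (val i).+1 | i : 'I_(l ^ (n - 1))]
  /\ #|(alpha l n 1 ^: Gn l n)%g| = l ^ (n - 1).
Proof.
have l1 := prime_gt1 hl; have n0 : 0 < n by apply: leq_trans hn.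
have l0 : 0 < l by apply: ltnW.
have E : (alpha l n 1 ^: Gn l n)%g = [set beta l n (val i).+1 | i : 'I_(l ^ (n - 1))].
  apply/setP => s; apply/idP/idP.
    case/imsetP => g gG ->.
    have Hlt : (g (p0 n l1) : nat) %/ l < l ^ (n - 1).
      by rewrite ltn_divLR // -expnSr subn1 prednK.
    rewrite (conj_alpha l1 n0 gG (y := p0 n l1)) //=; last by rewrite div0n.
    by apply/imsetP; exists (Ordinal Hlt).
  case/imsetP => i _ ->.
  have il : (i : nat) * l < l ^ n.
    exact: mul_lt (ltn_ord i).
  have [g gG Hg] := reach l1 (leqnn n) il.
  apply/imsetP; exists g => //.
  by rewrite (conj_alpha l1 n0 gG (y := p0 n l1)) //= ?div0n // Hg mulnK.
split; first by move=> s sG sk; exact: (kcycle_beta l1 n0 sG sk).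
split => //; rewrite E card_imset ?card_ord //; exact: beta_inj l1 n0.
Qed.

Unset Implicit Arguments.
Theorem mainTheorem16 (l n : nat) (hl : prime l) (hn : 2 <= n) :
  (forall s : {perm 'I_(l ^ n)}, s \in Gn l n -> is_kcycle l s ->
     exists i j : nat, (1 <= i <= l ^ (n - 1)) /\ s = (beta l n i ^+ j)%g)
  /\ (alpha l n 1 ^: Gn l n)%g = [set beta l n (val i).+1 | i : 'I_(l ^ (n - 1))]
  /\ #|(alpha l n 1 ^: Gn l n)%g| = l ^ (n - 1).
Proof. exact: main_aux. Qed.
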